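(* Assume $\mathrm{recc}(C)\subseteq\mathrm{recc}(P^B)$ and fix $k\in N_2$. For $j\in N$ let $\beta^*_j=\sup\{\lambda\ge0:\bar x+\lambda\bar r^j\in S_k^C\}$. Then $$\beta^*_j=\begin{cases}0&\text{if } j\in N_0\setminus J,\\ \beta_j&\text{if } j\in N_2\setminus J,\\ +\infty&\text{if } j\in J.\end{cases}$$
   Context: Let $A\in\mathbb{R}^{m\times n}$ have full row rank, $b\in\mathbb{R}^m$, and $P=\{x\in\mathbb{R}^n_+:Ax=b\}$. Let $C\subseteq\mathbb{R}^n$ be an open convex set. Fix a basis $B$ of $P$ with nonbasic set $N=\{1,\dots,n\}\setminus B$. Write $P=\{x:x_i=\bar b_i-\sum_{j\in N}\bar a_{ij}x_j\ (i\in B),\ x\ge0\}$ with $\bar b\ge0$. The basic solution $\bar x$ has $\bar x_i=\bar b_i$ ($i\in B$) and $0$ ($i\in N$). $P^B$ is obtained by dropping $x_i\ge0$ for $i\in B$. For $j\in N$, $\bar r^j$ has $\bar r^j_k=-\bar a_{kj}$ ($k\in B$), $\bar r^j_j=1$, and $0$ otherwise. Thus $P^B=\{\bar x+\sum_{j\in N}x_j\bar r^j:x_j\ge0\}$. It is assumed that $\bar x\notin\mathrm{cl}(C)$. For $j\in N$, $\alpha_j=\inf\{\lambda\ge0:\bar x+\lambda\bar r^j\in C\}$ and $\beta_j=\sup\{\lambda\ge0:\bar x+\lambda\bar r^j\in C\}$, with $\alpha_j=+\infty$, $\beta_j=-\infty$ if the halfline misses $C$. The set $N$ is partitioned into - $N_0=\{j:\alpha_j=+\infty,\beta_j=-\infty\}$,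 - $N_1=\{j:\alpha_j\in(0,\infty),\beta_j=+\infty\}$, - $N_2=\{j:\alpha_j\in(0,\infty),\beta_j\in(\alpha_j,\infty)\}$. For a set $K$, $\mathrm{recc}(K)=\{d:x+\lambda d\in K\ \forall x\in K,\lambda\ge0\}$. For $k\in N_2$, $S_k^C=\{\bar x\}+\mathrm{conv}\big(\bigcup_{j\in N_2}\{\lambda\bar r^j:0\le\lambda<\beta_j\}\big)+\{\lambda\bar r^k:\lambda\le0\}+\mathrm{recc}(C)$, and $J=\{i\in N:\bar r^i\in\mathrm{recc}(S_k^C)\}$. *)

(* Defs.v *)
(* Vectors of R^n are row vectors 'rV[R]_n
   (with the canonical normed-space topology from matrix_normedtype). *)
From HB Require Import structures.
From mathcomp Require Import all_boot all_order all_algebra.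
From mathcomp Require Import all_classical all_reals all_analysis.
Set Implicit Arguments. Unset Strict Implicit. Unset Printing Implicit Defensive.
Import Order.TTheory GRing.Theory Num.Theory.
Import numFieldTopology.Exports numFieldNormedType.Exports.
Local Open Scope classical_set_scope.
Local Open Scope ring_scope.

Section Defs.
Variables (R : realType) (m n : nat).
Implicit Types (A : 'M[R]_(m, n)) (b : 'cV[R]_m) (f : 'I_m -> 'I_n).

Definition polyP A b : set 'rV[R]_n :=
  [set x : 'rV[R]_n | (forall i, 0 <= x 0 i) /\ A *m x^T = b].

(* A basis is given as an injective enumeration f : 'I_m -> 'I_n of the basic
   columns such that the basic submatrix A_B is invertible. *)
Definition is_basis A f := injective f /\ colsub f A \in unitmx.

Definition basic_set f : {set 'I_n} := [set i | [exists p, f p == i]].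
Definition nonbasic f (j : 'I_n) : bool := j \notin basic_set f.

Definition Abar A f : 'M[R]_(m, n) := invmx (colsub f A) *m A.
Definition bbar A b f : 'cV[R]_m := invmx (colsub f A) *m b.

Definition feasible_basis A b f := forall p, 0 <= bbar A b f p 0.

Definition xbar A b f : 'rV[R]_n :=
  \row_i (if [pick p | f p == i] is Some p then bbar A b f p 0 else 0).

Definition rbar A f (j : 'I_n) : 'rV[R]_n :=
  \row_k (if k == j then 1
          else if [pick p | f p == k] is Some p then - Abar A f p j else 0).

Definition PB A b f : set 'rV[R]_n :=
  [set y : 'rV[R]_n | exists x : 'I_n -> R, (forall j, nonbasic f j -> 0 <= x j) /\
     y = xbar A b f + \sum_(j | nonbasic f j) x j *: rbar A f j].

Definition recc (K : set 'rV[R]_n) : set 'rV[R]_n :=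
  [set d : 'rV[R]_n | forall x, K x -> forall l : R, 0 <= l -> K (x + l *: d)].

Definition convex_set_rv (K : set 'rV[R]_n) :=
  forall x y (t : R), K x -> K y -> 0 <= t <= 1 -> K (t *: x + (1 - t) *: y).

Definition conv (S : set 'rV[R]_n) : set 'rV[R]_n :=
  [set y : 'rV[R]_n | exists (q : nat) (v : 'I_q -> 'rV[R]_n) (w : 'I_q -> R),
     (forall i, S (v i)) /\ (forall i, 0 <= w i) /\ \sum_i w i = 1 /\
     y = \sum_i w i *: v i].

Definition minkowski (S T : set 'rV[R]_n) : set 'rV[R]_n :=
  [set z : 'rV[R]_n | exists x y, S x /\ T y /\ z = x + y].

Definition ray_hits (x d : 'rV[R]_n) (K : set 'rV[R]_n) : set (\bar R) :=
  [set l%:E | l in [set l : R | 0 <= l /\ K (x + l *: d)]].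

(* alpha_j = inf, beta_j = sup; empty set gives +oo / -oo respectively *)
Definition alpha A b f (C : set 'rV[R]_n) j : \bar R :=
  ereal_inf (ray_hits (xbar A b f) (rbar A f j) C).
Definition beta A b f (C : set 'rV[R]_n) j : \bar R :=
  ereal_sup (ray_hits (xbar A b f) (rbar A f j) C).

Definition inN0 A b f C j := nonbasic f j /\
  alpha A b f C j = +oo%E /\ beta A b f C j = -oo%E.
Definition inN1 A b f C j := nonbasic f j /\
  (0 < alpha A b f C j < +oo)%E /\ beta A b f C j = +oo%E.
Definition inN2 A b f C j := nonbasic f j /\
  (0 < alpha A b f C j < +oo)%E /\
  (alpha A b f C j < beta A b f C j < +oo)%E.

Definition SkC A b f C (k : 'I_n) : set 'rV[R]_n :=
  minkowski
    (minkowski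
      (minkowski [set xbar A b f]
         (conv [set v | exists j l, inN2 A b f C j /\ 0 <= l /\
                         (l%:E < beta A b f C j)%E /\ v = l *: rbar A f j]))
      [set v | exists l : R, l <= 0 /\ v = l *: rbar A f k])
    (recc C).

Definition Jset A b f C k (i : 'I_n) :=
  nonbasic f i /\ recc (SkC A b f C k) (rbar A f i).

Definition beta_star A b f C k j : \bar R :=
  ereal_sup (ray_hits (xbar A b f) (rbar A f j) (SkC A b f C k)).

End Defs.

(* Main.v *)
Require Import Defs.
From HB Require Import structures.
From mathcomp Require Import all_boot all_order all_algebra.
From mathcomp Require Import all_classical all_reals all_analysis.
From mathcomp Require Import lra ring.
Import Order.TTheory GRing.Theory Num.Theory.
Import numFieldTopology.Exports numFieldNormedType.Exports.
Local Open Scope classical_set_scope.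
Local Open Scope ring_scope.

Section Aux.
Variables (R : realType) (m n : nat) (A : 'M[R]_(m, n)) (b : 'cV[R]_m)
  (C : set 'rV[R]_n) (f : 'I_m -> 'I_n) (k : 'I_n).

Local Notation rb := (rbar A f).
Local Notation xb := (xbar A b f).
Local Notation nb := (nonbasic f).

Lemma coordD (u v : 'rV[R]_n) i : (u + v) 0 i = u 0 i + v 0 i.
Proof. by rewrite mxE. Qed.
Lemma coordZ (a : R) (u : 'rV[R]_n) i : (a *: u) 0 i = a * u 0 i.
Proof. by rewrite mxE. Qed.
Lemma coordS I (r : seq I) (P : pred I) (F : I -> 'rV[R]_n) i :
  (\sum_(q <- r | P q) F q) 0 i = \sum_(q <- r | P q) F q 0 i.
Proof. by rewrite summxE. Qed.

Lemma nb_pick i : nb i -> [pick p | f p == i] = None.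
Proof.
move=> hi; case: pickP => // p /eqP fp; move: hi.
by rewrite /nonbasic /basic_set inE negb_exists => /forallP/(_ p); rewrite fp eqxx.
Qed.

Lemma rbN i p : nb i -> rb p 0 i = (i == p)%:R.
Proof. by move=> hi; rewrite /rbar mxE; case: (i == p) => //; rewrite nb_pick. Qed.

Lemma xbN i : nb i -> xb 0 i = 0.
Proof. by move=> hi; rewrite /xbar mxE nb_pick. Qed.

Lemma sumN (x : 'I_n -> R) i : nb i ->
  (\sum_(p | nb p) x p *: rb p) 0 i = x i.
Proof.
move=> hi; rewrite coordS (bigD1 i) //= big1 ?addr0.
  by rewrite coordZ rbN // eqxx mulr1.
move=> p /andP[_ ne]; rewrite coordZ rbN //.
by rewrite eq_sym (negbTE ne) mulr0.
Qed.

Lemma sum_two {x : 'I_n -> R} {j} : nb j -> nb k ->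
  (forall p, nb p -> p != j -> p != k -> x p = 0) ->
  \sum_(p | nb p) x p *: rb p =
    x j *: rb j + (if j == k then 0 else x k *: rb k).
Proof.
move=> hj hk h0; rewrite (bigD1 j) //=; congr (_ + _).
case: eqP => [ejk|/eqP njk].
  apply: big1 => p /andP[hp npj]; rewrite (h0 p) ?scale0r //.
  by rewrite -ejk.
rewrite (bigD1 k) /=; last by rewrite hk eq_sym njk.
rewrite big1 ?addr0 // => p /andP[/andP[hp npj] npk].
by rewrite (h0 p) ?scale0r.
Qed.

Lemma recc_addZ {K : set 'rV[R]_n} {e d s} :
  recc K e -> recc K d -> 0 <= s -> recc K (e + s *: d).
Proof.
move=> he hd hs x Kx l hl; rewrite scalerDr addrA scalerA.
by apply: hd; [exact: he | exact: mulr_ge0].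
Qed.

Lemma recc0 (K : set 'rV[R]_n) : recc K 0.
Proof. by move=> x Kx l _; rewrite scaler0 addr0. Qed.

Definition Xset := [set v : 'rV[R]_n | exists j l, inN2 A b f C j /\ 0 <= l /\
                         (l%:E < beta A b f C j)%E /\ v = l *: rb j].

Lemma SkC_inv {z} : SkC A b f C k z -> exists c mu e,
  Defs.conv Xset c /\ mu <= 0 /\ recc C e /\ z = xb + c + mu *: rb k + e.
Proof.
case=> x [e [[x' [y' [[x'' [c [hx'' [hc ->]]]] [[mu [hmu ->]] ->]]]] [he ->]]].
by exists c, mu, e; rewrite hx''.
Qed.

Lemma SkC_intro {c mu e} : Defs.conv Xset c -> mu <= 0 -> recc C e ->
  SkC A b f C k (xb + c + mu *: rb k + e).
Proof.
move=> hc hmu he; exists (xb + c + mu *: rb k), e; split; last by split.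
exists (xb + c), (mu *: rb k); split; last by split=> //; exists mu.
by exists xb, c.
Qed.

Lemma conv_single {v} : Xset v -> Defs.conv Xset v.
Proof.
move=> hv; exists 1%N, (fun _ => v), (fun _ => 1); split=> //; split=> //.
by rewrite !big_ord1 scale1r.
Qed.

Lemma conv0 : inN2 A b f C k -> Defs.conv Xset 0.
Proof.
move=> hk; apply: conv_single; exists k, 0; split=> //; split=> //; split.
  case: hk => _ [/andP[h1 _] /andP[h2 _]]; exact: lt_trans h1 h2.
by rewrite scale0r.
Qed.

Lemma convN {c i} : Defs.conv Xset c -> nb i -> 0 <= c 0 i /\
  (inN0 A b f C i -> c 0 i = 0) /\
  (forall r, beta A b f C i = r%:E -> 0 < r -> c 0 i < r).
Proof.
case=> q [v [w [hv [hw [hs ->]]]]] hi; rewrite coordS; under eq_bigr do rewrite coordZ.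
have ha q0 : 0 <= v q0 0 i /\ (inN0 A b f C i -> v q0 0 i = 0) /\
   (forall r, beta A b f C i = r%:E -> 0 < r -> v q0 0 i < r).
  case: (hv q0) => j [l [h2 [hl [hlb ->]]]]; rewrite coordZ rbN //.
  case: eqP => [->|_]; rewrite ?mulr1 ?mulr0; last by split.
  split=> //; split.
    move=> [_ [ha _]]; case: h2 => _ [/andP[_ hal] _].
    by rewrite ha in hal.
  by move=> r hb hr; rewrite hb lte_fin in hlb.
split; first by apply: sumr_ge0 => q0 _; exact: mulr_ge0 (hw q0) (ha q0).1.
split; first by move=> h0; apply: big1 => q0 _; rewrite (ha q0).2.1 // mulr0.
move=> r hb hr.
have [q0 hq0] : exists q0, 0 < w q0.
  case: (pselect (exists q0, 0 < w q0)) => // hn; exfalso.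
  have : \sum_q0 w q0 = 0.
    apply: big1 => q0 _; apply/eqP; rewrite eq_le hw andbT leNgt.
    by apply/negP => h; apply: hn; exists q0.
  by rewrite hs => /eqP; rewrite oner_eq0.
have -> : r = \sum_q1 w q1 * r by rewrite -mulr_suml hs mul1r.
rewrite -subr_gt0 -sumrB (bigD1 q0) //=.
have h1 : 0 < w q0 * r - w q0 * v q0 0 i.
  by rewrite -mulrBr mulr_gt0 // subr_gt0 (ha q0).2.2.
have h2 : 0 <= \sum_(i0 | i0 != q0) (w i0 * r - w i0 * v i0 0 i).
  apply: sumr_ge0 => q1 _; rewrite -mulrBr mulr_ge0 // subr_ge0 ltW //.
  exact: (ha q1).2.2.
lra.
Qed.

Lemma vec2 (a d0 u v : 'rV[R]_n) (t xj xk mu : R) : xj != 0 ->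
  a + mu *: u + d0 + t *: v =
  a + (mu - t * xk / xj) *: u + (d0 + (t / xj) *: (xj *: v + xk *: u)).
Proof. by move=> h; apply/rowP => i; rewrite !mxE; field. Qed.

Lemma vec1 (a d0 v : 'rV[R]_n) (t xj : R) : xj != 0 ->
  a + d0 + t *: v = a + (d0 + (t / xj) *: (xj *: v)).
Proof. by move=> h; apply/rowP => i; rewrite !mxE; field. Qed.

Lemma key {j lam} : inN2 A b f C k -> recc C `<=` recc (PB A b f) ->
  nb j -> SkC A b f C k (xb + lam *: rb j) -> ~ Jset A b f C k j ->
  exists c, Defs.conv Xset c /\ lam <= c 0 j.
Proof.
move=> hk hrec hj hS hJ.
have hkn : nb k := hk.1.
case: (SkC_inv hS) => c [mu [e [hc [hmu [he heq]]]]].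
have [x [hx ex]] : exists x, (forall p, nb p -> 0 <= x p) /\
    e = \sum_(p | nb p) x p *: rb p.
  have := hrec _ he xb _ 1 ler01.
  case.
    exists (fun _ => 0); split=> //.
    by rewrite big1 ?addr0 // => p _; rewrite scale0r.
  move=> x [hx]; rewrite scale1r => /addrI ->.
  by exists x.
have E i : nb i -> lam * (i == j)%:R = c 0 i + mu * (i == k)%:R + x i.
  move=> hi; move: (congr1 (fun M : 'rV[R]_n => M 0 i) heq) => /=.
  by rewrite !coordD !coordZ ex sumN // !rbN // xbN // !add0r.
have cpos i : nb i -> 0 <= c 0 i := fun hi => (convN hc hi).1.
have x0 i : nb i -> i != j -> i != k -> x i = 0.
  move=> hi nij nik; have := E i hi; rewrite (negbTE nij) (negbTE nik) !mulr0 addr0 => h.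
  have := cpos i hi; have := hx i hi; lra.
have xj0 : x j = 0.
  apply/eqP; rewrite eq_le hx // andbT leNgt; apply/negP => xpos; apply: hJ.
  split=> // s hs t ht.
  case: (SkC_inv hs) => c' [mu' [e' [hc' [hmu' [he' ->]]]]].
  have hex := sum_two hj hkn x0; rewrite -ex in hex.
  have xjn : x j != 0 by rewrite gt_eqF.
  have htx : 0 <= t / x j by rewrite divr_ge0 // ltW.
  case: eqP hex => [ejk|njk] hex.
    rewrite addr0 in hex.
    rewrite (vec1 (xb + c' + mu' *: rb k) e' _ t (x j) xjn) -hex.
    by apply: SkC_intro => //; apply: recc_addZ.
  rewrite (vec2 (xb + c') e' _ _ t (x j) (x k) mu' xjn) -hex.
  apply: SkC_intro => //; last by apply: recc_addZ.
  have : 0 <= t * x k / x j by rewrite divr_ge0 ?mulr_ge0 ?hx // ltW.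
  lra.
exists c; split=> //.
have := E j hj; rewrite eqxx xj0 addr0 mulr1 => ->.
case: (j == k); rewrite ?mulr1 ?mulr0; lra.
Qed.

End Aux.
Arguments conv0 {R m n A b C f k}.
Arguments key {R m n A b C f k j lam}.
Arguments SkC_intro {R m n A b C f k c mu e}.
Arguments convN {R m n A b C f c i}.
Arguments conv_single {R m n A b C f v}.
Arguments recc0 {R n K}.

Theorem proposition7 (R : realType) (m n : nat)
  (A : 'M[R]_(m, n)) (b : 'cV[R]_m) (C : set 'rV[R]_n) (f : 'I_m -> 'I_n)
  (k : 'I_n) :
  \rank A = m ->
  is_basis A f ->
  feasible_basis A b f ->
  open C -> convex_set_rv C ->
  ~ closure C (xbar A b f) ->
  (forall j, nonbasic f j ->
     inN0 A b f C j \/ inN1 A b f C j \/ inN2 A b f C j) ->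
  recc C `<=` recc (PB A b f) ->
  inN2 A b f C k ->
  forall j, nonbasic f j ->
    (inN0 A b f C j -> ~ Jset A b f C k j -> beta_star A b f C k j = 0%E) /\
    (inN2 A b f C j -> ~ Jset A b f C k j ->
       beta_star A b f C k j = beta A b f C j) /\
    (Jset A b f C k j -> beta_star A b f C k j = +oo%E).
Proof.
move=> _ _ _ _ _ _ _ hrec hk j hj.
have xS : SkC A b f C k (xbar A b f).
  have -> : xbar A b f = xbar A b f + 0 + 0 *: rbar A f k + 0.
    by rewrite scale0r !addr0.
  by apply: SkC_intro; [exact: (conv0 hk) | by [] | exact: recc0].
have in0 : ray_hits (xbar A b f) (rbar A f j) (SkC A b f C k) 0%:E.
  by exists 0 => //; split => //; rewrite scale0r addr0.
have ge0 : (0%:E <= beta_star A b f C k j)%E by apply: ereal_sup_ubound.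
split.
  move=> h0 hJ; apply/le_anti; rewrite ge0 andbT.
  apply: ge_ereal_sup => _ [l [hl hS] <-].
  case: (key hk hrec hj hS hJ) => c [hc hlc].
  by rewrite lee_fin (le_trans hlc) // ((convN hc hj).2.1 h0).
split.
  move=> h2 hJ.
  have [r hr] : exists r, beta A b f C j = r%:E.
    case: h2 => _ [/andP[h0 _] /andP[h1 h3]].
    move: (lt_trans h0 h1) h3; case: (beta A b f C j) => [r _ _| |] //; first by exists r.
  have rpos : 0 < r.
    case: h2 => _ [/andP[h1 _] /andP[h3 _]].
    by rewrite -lte_fin -hr (lt_trans h1 h3).
  rewrite hr; apply/le_anti; apply/andP; split.
    apply: ge_ereal_sup => _ [l [hl hS] <-].
    case: (key hk hrec hj hS hJ) => c [hc hlc].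
    by rewrite lee_fin ltW // (le_lt_trans hlc) // ((convN hc hj).2.2 r hr rpos).
  have lb l : 0 <= l < r -> (l%:E <= beta_star A b f C k j)%E.
    move=> /andP[hl hlr]; apply: ereal_sup_ubound; exists l => //; split=> //.
    have -> : xbar A b f + l *: rbar A f j =
      xbar A b f + l *: rbar A f j + 0 *: rbar A f k + 0 by rewrite scale0r !addr0.
    apply: SkC_intro => //; last exact: recc0.
    by apply: conv_single; exists j, l; split=> //; split=> //; rewrite hr lte_fin.
  move: ge0 lb; case: (beta_star A b f C k j) => [q hq lb| _ _|hq _];
    [|exact: leey|by rewrite leeNy_eq in hq].
  rewrite lee_fin leNgt; apply/negP => hqr.
  rewrite lee_fin in hq.
  have := lb ((q + r) / 2); rewrite lee_fin.
  have -> : (0 <= (q + r) / 2 < r) = true by apply/andP; split; lra.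
  move=> /(_ isT); lra.
move=> hJ.
have lb l : 0 <= l -> (l%:E <= beta_star A b f C k j)%E.
  move=> hl; apply: ereal_sup_ubound; exists l => //; split=> //.
  exact: hJ.2 _ xS _ hl.
move: ge0 lb; case: (beta_star A b f C k j) => [q hq lb| _ _|hq _];
  [|by []|by rewrite leeNy_eq in hq].
have h := lb (`|q| + 1) (addr_ge0 (normr_ge0 q) ler01).
rewrite lee_fin in h.
have h2 := ler_norm q.
exfalso; clear -h h2; lra.
Qed.
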